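(* Let $(S,\ast)$ be a countable adequate partial semigroup and let $A\subseteq S$. If there is an idempotent $p\in\overline{A}\cap J_\delta(S)$, then there is a decreasing sequence $\langle A_n\rangle_{n=1}^\infty$ of subsets of $A$ such that (i) for all $n\in\mathbb{N}$ and all $x\in A_n$ there exists $m\in\mathbb{N}$ with $A_m\subseteq x^{-1}A_n$; (ii) for all $n\in\mathbb{N}$, $A_n$ is a $J_\delta$-set.
   Context: A partial semigroup is a pair $(S,\ast)$ where $\ast$ is an operation defined on a subset of $S\times S$ such that $(x\ast y)\ast z=x\ast(y\ast z)$ in the sense that if either side is defined, so is the other and they are equal. $\phi_S(s)=\{t: s\ast t\text{ defined}\}$, $\sigma_S(H)=\bigcap_{s\in H}\phi_S(s)$ for $H\in\mathcal{P}_f(S)$; $S$ is adequate if all $\sigma_S(H)\ne\emptyset$. $\overline{A}=\{p\in\beta S: A\in p\}$. $\delta S=\bigcap_{x\in S}\overline{\phi_S(x)}$, with operation $p\ast q=\{B\subseteq S:\{s: s^{-1}B\in q\}\in p\}$, where $s^{-1}B=\{t\in\phi_S(s): s\ast t\in B\}$. A sequence $\langle y_n\rangle$ in $S$ is adequate if $\prod_{n\in F}y_n$ is defined for every $F\in\mathcal{P}_f(\mathbb{N})$ and for every $K\in\mathcal{P}_f(S)$ there is $m$ with $\prod_{n\in F}y_n\in\sigma_S(K)$ whenever $\min F\ge m$; $\mathcal{T}_S$ is the set of adequate sequences. For $W\in\mathcal{P}_f(S)$, $a\in S$, $W\ast a=\{w\ast a: w\in W,\ w\ast a\text{ defined}\}$.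 $B\subseteq S$ is a $J_\delta$-set if for every $F\in\mathcal{P}_f(\mathcal{T}_S)$ and $W\in\mathcal{P}_f(S)$ there exist $a\in\sigma_S(W)$ and $H\in\mathcal{P}_f(\mathbb{N})$ with $\prod_{t\in H}f(t)\in\sigma_S(W\ast a)$ and $a\ast\prod_{t\in H}f(t)\in B$ for each $f\in F$; $J_\delta(S)=\{p\in\delta S:\text{every member of }p\text{ is a }J_\delta\text{-set}\}$. *)

(* Defs.v *)
From Stdlib Require Import List Arith Sorted.
Import ListNotations.

Section PS.
Variable T : Type.
Variable op : T -> T -> option T.   (* x * y; None = undefined *)

(* (x*y)*z = x*(y*z): either side defined iff the other is, and then equal *)
Definition partial_semigroup : Prop :=
  forall x y z : T,
    match op x y with Some u => op u z | None => None end =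
    match op y z with Some v => op x v | None => None end.

Definition countable : Prop := exists f : T -> nat, forall x y, f x = f y -> x = y.

Definition phi (s : T) : T -> Prop := fun t => op s t <> None.

(* sigma_S(H), H a nonempty finite subset given as a nonempty list *)
Definition sigma (H : list T) : T -> Prop := fun t => forall s, In s H -> phi s t.

Definition adequate : Prop := forall H : list T, H <> [] -> exists t, sigma H t.

Definition inv (s : T) (B : T -> Prop) : T -> Prop :=
  fun t => exists u, op s t = Some u /\ B u.

Definition ultrafilter (p : (T -> Prop) -> Prop) : Prop :=
  p (fun _ => True) /\
  ~ p (fun _ => False) /\
  (forall A B : T -> Prop, p A -> (forall x, A x -> B x) -> p B) /\
  (forall A B : T -> Prop, p A -> p B -> p (fun x => A x /\ B x)) /\
  (forall A : T -> Prop, p A \/ p (fun x => ~ A x)).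

Definition in_deltaS (p : (T -> Prop) -> Prop) : Prop :=
  ultrafilter p /\ forall x : T, p (phi x).

Definition conv (p q : (T -> Prop) -> Prop) : (T -> Prop) -> Prop :=
  fun B => p (fun s => q (inv s B)).

Definition idempotent (p : (T -> Prop) -> Prop) : Prop :=
  forall B : T -> Prop, conv p p B <-> p B.

(* nonempty finite subsets of N represented as strictly increasing nonempty lists *)
Definition fin_index (F : list nat) : Prop := F <> [] /\ StronglySorted lt F.

Fixpoint prod_seq (y : nat -> T) (F : list nat) : option T :=
  match F with
  | [] => None
  | [n] => Some (y n)
  | n :: F' => match prod_seq y F' with Some v => op (y n) v | None => None end
  end.

Definition adequate_seq (y : nat -> T) : Prop :=
  (forall F, fin_index F -> prod_seq y F <> None) /\
  (forall K : list T, K <> [] -> exists m : nat,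
     forall F, fin_index F -> (forall n, In n F -> m <= n) ->
       exists v, prod_seq y F = Some v /\ sigma K v).

(* sigma_S(W * a), where W*a = {w*a : w in W, w*a defined} *)
Definition sigma_Wa (W : list T) (a : T) : T -> Prop :=
  fun t => forall w z, In w W -> op w a = Some z -> phi z t.

Definition Jdelta_set (B : T -> Prop) : Prop :=
  forall (F : list (nat -> T)) (W : list T),
    F <> [] -> (forall f, In f F -> adequate_seq f) -> W <> [] ->
    exists a H, sigma W a /\ fin_index H /\
      forall f, In f F ->
        exists v, prod_seq f H = Some v /\ sigma_Wa W a v /\
                  exists u, op a v = Some u /\ B u.

Definition in_Jdelta (p : (T -> Prop) -> Prop) : Prop :=
  in_deltaS p /\ forall B, p B -> Jdelta_set B.

End PS.
Arguments partial_semigroup {T} op.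
Arguments adequate {T} op.
Arguments inv {T} op s B _.
Arguments idempotent {T} op p.
Arguments in_Jdelta {T} op p.
Arguments Jdelta_set {T} op B.
Arguments countable T : clear implicits.

(* Main.v *)
Require Import Defs.
From Stdlib Require Import List Arith Sorted Lia Classical.

Section Aux.
Variable T : Type.
Variable op : T -> T -> option T.
Variable p : (T -> Prop) -> Prop.
Hypothesis Hps : partial_semigroup op.
Hypothesis Hu : ultrafilter T p.
Hypothesis Hid : idempotent op p.

Definition star (B : T -> Prop) : T -> Prop := fun x => B x /\ p (inv op x B).

Lemma p_mono : forall A B : T -> Prop, p A -> (forall x, A x -> B x) -> p B.
Proof. destruct Hu as (_&_&H&_). exact H. Qed.
Lemma p_inter : forall A B : T -> Prop, p A -> p B -> p (fun x => A x /\ B x).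
Proof. destruct Hu as (_&_&_&H&_). exact H. Qed.
Lemma p_true : p (fun _ => True).
Proof. destruct Hu as (H&_). exact H. Qed.

Lemma star_in B : p B -> p (star B).
Proof.
  intro HB. apply Hid in HB. unfold conv in HB.
  apply (p_mono _ _ (p_inter _ _ (proj1 (Hid B) HB) HB)).
  intros x [H1 H2]. split; assumption.
Qed.

Lemma star_inv B x : star B x -> p (inv op x (star B)).
Proof.
  intros [Bx Hx]. pose proof (proj2 (Hid _) Hx) as H2. unfold conv in H2.
  apply (p_mono _ _ (p_inter _ _ Hx H2)).
  intros y [[u [Hxy Bu]] Hy]. exists u. split; [exact Hxy|]. split; [exact Bu|].
  apply (p_mono _ _ Hy). intros z [w [Hyz [v [Hxw Bv]]]]. exists v. split; [|exact Bv].
  pose proof (Hps x y z) as E. rewrite Hxy, Hyz in E. rewrite E. exact Hxw.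
Qed.

Lemma fin_inter_nat : forall N (R : nat -> T -> Prop),
  (forall k, k <= N -> p (R k)) -> p (fun y => forall k, k <= N -> R k y).
Proof.
  induction N; intros R HR.
  - apply (p_mono _ _ (HR 0 (le_n 0))). intros y Hy k Hk.
    assert (k = 0) by lia. subst. exact Hy.
  - apply (p_mono _ _ (p_inter _ _ (IHN R (fun k Hk => HR k (le_S _ _ Hk))) (HR (S N) (le_n _)))).
    intros y [H1 H2] k Hk. destruct (Nat.eq_dec k (S N)) as [->|Hne]; [exact H2|].
    apply H1. lia.
Qed.

Variable f : T -> nat.
Hypothesis finj : forall x y, f x = f y -> x = y.

Lemma fin_inter2 : forall N (P : T -> nat -> Prop) (Q : T -> nat -> T -> Prop),
  (forall x i, f x <= N -> i <= N -> P x i -> p (Q x i)) ->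
  p (fun y => forall x i, f x <= N -> i <= N -> P x i -> Q x i y).
Proof.
  intros N P Q HQ.
  assert (Hk : p (fun y => forall k, k <= N -> forall i, i <= N ->
                 forall x, f x = k -> P x i -> Q x i y)).
  { apply fin_inter_nat. intros k Hk.
    apply (fin_inter_nat N (fun i y => forall x, f x = k -> P x i -> Q x i y)).
    intros i Hi.
    destruct (classic (exists x, f x = k /\ P x i)) as [[x0 [E0 P0]]|Hn].
    - apply (p_mono _ _ (HQ x0 i ltac:(lia) Hi P0)).
      intros y Hy x Ex Px. assert (x = x0) by (apply finj; lia). subst. exact Hy.
    - apply (p_mono _ _ p_true). intros y _ x Ex Px. exfalso. apply Hn. eauto. }
  apply (p_mono _ _ Hk). intros y Hy x i Hx Hi Px. exact (Hy (f x) Hx i Hi x eq_refl Px).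
Qed.

Variable A0 : T -> Prop.

Fixpoint H (n : nat) : nat -> T -> Prop :=
  match n with
  | 0 => fun _ => star A0
  | S n' => fun j => if j <=? n' then H n' j else
       star (fun y => H n' n' y /\ forall x i, f x <= n' -> i <= n' -> H n' i x -> inv op x (H n' i) y)
  end.

Lemma H_stable : forall k n j, j <= n -> H (k + n) j = H n j.
Proof.
  induction k; intros n j Hj; [reflexivity|].
  simpl. replace (j <=? k + n) with true by (symmetry; apply Nat.leb_le; lia).
  apply IHk; exact Hj.
Qed.

Lemma H_le : forall n j, j <= n -> H n j = H j j.
Proof. intros n j Hj. replace n with ((n - j) + j) by lia. apply H_stable. lia. Qed.

Lemma H_S : forall n, H (S n) (S n) =
  star (fun y => H n n y /\ forall x i, f x <= n -> i <= n -> H n i x -> inv op x (H n i) y).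
Proof. intro n. cbn [H]. rewrite (proj2 (Nat.leb_gt (S n) n) ltac:(lia)). reflexivity. Qed.

Hypothesis HA0 : p A0.

Definition Pinv n := p (H n n) /\ (forall x, H n n x -> p (inv op x (H n n)))
   /\ (forall x, H n n x -> A0 x).

Lemma H_inv_all : forall n j, j <= n -> Pinv j.
Proof.
  intros n. induction n as [|n IH]; intros j Hj.
  - assert (j = 0) by lia. subst. unfold Pinv. simpl. repeat split.
    + apply star_in; exact HA0.
    + intros x Hx. apply star_inv; exact Hx.
    + intros x [Hx _]; exact Hx.
  - destruct (Nat.eq_dec j (S n)) as [->|Hne]; [|apply IH; lia].
    destruct (IH n (le_n _)) as [IH1 [IH2 IH3]].
    unfold Pinv. rewrite H_S. repeat split.
    + apply star_in. apply p_inter; [exact IH1|].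
      apply fin_inter2. intros x i Hx Hi Px.
      rewrite (H_le n i Hi) in Px |- *.
      destruct (IH i Hi) as [_ [Hi2 _]]. apply Hi2; exact Px.
    + intros x Hx. apply star_inv; exact Hx.
    + intros x [[Hx _] _]. apply IH3; exact Hx.
Qed.
End Aux.

Theorem corollary4p5 (T : Type) (op : T -> T -> option T)
  (Hps : partial_semigroup op) (Hcount : countable T) (Had : adequate op)
  (A : T -> Prop) :
  (exists p : (T -> Prop) -> Prop,
     in_Jdelta op p /\ idempotent op p /\ p A) ->
  exists An : nat -> (T -> Prop),
    (forall n x, An (n + 1) x -> An n x) /\
    (forall n x, An n x -> A x) /\
    (forall n x, An n x -> exists m, forall y, An m y -> inv op x (An n) y) /\
    (forall n, Jdelta_set op (An n)).
Proof.
  intros [p [[[Hu _] HJ] [Hid HpA]]].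
  destruct Hcount as [f finj].
  exists (fun n => H T op p f A n n).
  repeat split.
  - intros n x Hx. rewrite Nat.add_1_r in Hx. rewrite H_S in Hx. destruct Hx as [[Hx _] _]. exact Hx.
  - intros n x Hx. exact (proj2 (proj2 (H_inv_all T op p Hps Hu Hid f finj A HpA n n (le_n _))) x Hx).
  - intros n x Hx. exists (S (Nat.max n (f x))). intros y Hy.
    rewrite H_S in Hy. destruct Hy as [[_ Hy] _].
    specialize (Hy x n ltac:(lia) ltac:(lia)).
    rewrite (H_le T op p f A (Nat.max n (f x)) n ltac:(lia)) in Hy.
    apply Hy; exact Hx.
  - intros n. apply HJ. exact (proj1 (H_inv_all T op p Hps Hu Hid f finj A HpA n n (le_n _))).
Qed.
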